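(* Let $A$ be a commutative ring, $M$ an $A$-module, $L$ a proper $A$-submodule of $M$, and $T \subseteq A$. If $L$ is a $T$-factroid of $M$, then $\langle T \rangle \cap \operatorname{ann}_A(M/L) = \emptyset$. The converse holds if $L$ is a primary submodule of $M$.
   Context: For $T\subseteq A$, a $T$-factroid of $M$ is an additive subgroup $F$ of $M$ such that for all $x\in M$ and $t\in T$, $tx\in F$ implies $x\in F$. $\langle T\rangle$ is the multiplicative submonoid of $A$ generated by $T$. A proper submodule $L$ of $M$ is primary if for every $r\in A$, either $\{x\in M\mid rx\in L\}=L$ or $r^nM\subseteq L$ for some $n\in\mathbb{N}$. *)

(* Defs.v *)
From mathcomp Require Import all_boot all_algebra.
Set Implicit Arguments. Unset Strict Implicit. Unset Printing Implicit Defensive.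
Import GRing.Theory.
Local Open Scope ring_scope.

Section Defs.
Variables (A : comNzRingType) (M : lmodType A).

Definition is_submodule (L : M -> Prop) : Prop :=
  L 0 /\ (forall (a : A) (u v : M), L u -> L v -> L (a *: u + v)).

Definition is_add_subgroup (F : M -> Prop) : Prop :=
  F 0 /\ (forall u v : M, F u -> F v -> F (u - v)).

Definition proper_submod (L : M -> Prop) : Prop := exists x : M, ~ L x.

Definition factroid (T : A -> Prop) (F : M -> Prop) : Prop :=
  is_add_subgroup F /\
  (forall (x : M) (t : A), T t -> F (t *: x) -> F x).

Inductive gen_monoid (T : A -> Prop) : A -> Prop :=
  | gen_monoid_one : gen_monoid T 1
  | gen_monoid_gen : forall t, T t -> gen_monoid T t
  | gen_monoid_mul : forall r s, gen_monoid T r -> gen_monoid T s ->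
                       gen_monoid T (r * s).

Definition ann_quot (L : M -> Prop) (r : A) : Prop := forall x : M, L (r *: x).

Definition primary (L : M -> Prop) : Prop :=
  is_submodule L /\ proper_submod L /\
  forall r : A,
    (forall x : M, L (r *: x) <-> L x) \/
    (exists n : nat, forall x : M, L (r ^+ n *: x)).

End Defs.

(* Main.v *)
Require Import Defs.
From mathcomp Require Import all_boot all_algebra.
Local Open Scope ring_scope.
Import GRing.Theory.

Lemma gm_cancel (A : comNzRingType) (M : lmodType A)
  (L : M -> Prop) (T : A -> Prop) :
  (forall (x : M) (t : A), T t -> L (t *: x) -> L x) ->
  forall r, gen_monoid T r -> forall x, L (r *: x) -> L x.
Proof.
move=> H r; elim=> [|t Tt|r' s _ IHr _ IHs] x.
- by rewrite scale1r.
- exact: H.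
- rewrite -scalerA => /IHr; exact: IHs.
Qed.

Lemma gm_exp (A : comNzRingType) (T : A -> Prop) t n :
  T t -> gen_monoid T (t ^+ n).
Proof.
move=> Tt; elim: n => [|n IH]; first by rewrite expr0; constructor.
rewrite exprS; apply: gen_monoid_mul => //; exact: gen_monoid_gen.
Qed.

Theorem proposition3p12 (A : comNzRingType) (M : lmodType A)
  (L : M -> Prop) (T : A -> Prop) :
  is_submodule L -> proper_submod L ->
  (factroid T L -> forall r : A, gen_monoid T r -> ~ ann_quot L r) /\
  (primary L -> (forall r : A, gen_monoid T r -> ~ ann_quot L r) ->
     factroid T L).
Proof.
move=> [L0 Lc] [y Ny]; split.
  move=> [_ HF] r Hr Hann; apply: Ny; exact: (@gm_cancel A M L T HF r Hr y (Hann y)).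
move=> [_ [_ HP]] Hno; split.
  split=> // u v Lu Lv.
  have Lnv : L (- v) by rewrite -[- v]addr0 -scaleN1r; exact: Lc.
  by rewrite -[u]scale1r; exact: Lc.
move=> x t Tt Ltx.
case: (HP t) => [Heq|[n Hn]]; first by apply/Heq.
exfalso; exact: (Hno _ (@gm_exp A T t n Tt) Hn).
Qed.
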